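(* Let $\mathcal X,\mathcal Y$ be compact convex sets and $\mathcal L:\mathcal X\times\mathcal Y\to\mathbb R$ a differentiable convex-concave function that is uniformly strongly convex-concave with constants $(\mu_{\mathcal X},\mu_{\mathcal Y})$, $\mu_{\mathcal X},\mu_{\mathcal Y}>0$. Let $(x_c,y_c)$ belong to the relative interior of $\mathcal X\times\mathcal Y$ and define $\delta_x:=\min_{s_x\in\partial\mathcal X}\|s_x-x_c\|>0$ and $\delta_y:=\min_{s_y\in\partial\mathcal Y}\|s_y-y_c\|$. Then $$\mu^{x_c}_{\mathcal L}\ge\mu_{\mathcal X}\delta_x^2\qquad\text{and}\qquad\mu^{y_c}_{\mathcal L}\ge\mu_{\mathcal Y}\delta_y^2.$$
   Context: $\partial$ denotes the relative boundary. Uniformly strongly convex-concave: $\mathcal L(\cdot,y)$ is $\mu_{\mathcal X}$-strongly convex for every $y$ and $-\mathcal L(x,\cdot)$ is $\mu_{\mathcal Y}$-strongly convex for every $x$ (w.r.t. the norms used to define $\delta_x,\delta_y$). Interior strong convexity of a convex differentiable $f$ on a convex set $\mathcal K$ w.r.t. a point $x_c$ in its relative interior: $\mu_f^{x_c}:=\inf\frac2{\gamma^2}(f(u)-f(x)-\langle u-x,\nabla f(x)\rangle)$ over $x\in\mathcal K\setminus\{x_c\}$, $\gamma\in(0,1]$, $u=x+\gamma(s-x)$, where $s$ is the point where the ray from $x$ through $x_c$ meets the relative boundary of $\mathcal K$. Then $\mu^{x_c}_{\mathcal L}:=\inf_{y\in\mathcal Y}\mu^{x_c}_{\mathcal L(\cdot,y)}$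 and $\mu^{y_c}_{\mathcal L}:=\inf_{x\in\mathcal X}\mu^{y_c}_{-\mathcal L(x,\cdot)}$. *)

(* Defs.v *)
From HB Require Import structures.
From mathcomp Require Import all_boot all_order all_algebra.
From mathcomp Require Import all_classical all_reals all_analysis.
Set Implicit Arguments. Unset Strict Implicit. Unset Printing Implicit Defensive.
Import Order.TTheory GRing.Theory Num.Theory.
Import numFieldNormedType.Exports.
Local Open Scope classical_set_scope.
Local Open Scope ring_scope.

Section Defs.
Context {R : realType} {V : normedModType R}.

Definition aff_hull (K : set V) : set V :=
  [set z | exists s : seq (R * V),
      (forall p, p \in s -> K p.2) /\
      \sum_(p <- s) p.1 = 1 /\ z = \sum_(p <- s) p.1 *: p.2].

Definition relint (K : set V) : set V :=
  [set x | K x /\ exists e : R, 0 < e /\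
      forall z, aff_hull K z -> `|z - x| < e -> K z].

Definition relbd (K : set V) : set V := closure K `\` relint K.

Definition strongly_convex_on (mu : R) (K : set V) (f : V -> R) :=
  forall x u (t : R), K x -> K u -> 0 <= t <= 1 ->
    f (t *: x + (1 - t) *: u) <=
      t * f x + (1 - t) * f u - mu / 2 * t * (1 - t) * `|x - u| ^+ 2.

Definition convex_on (K : set V) (f : V -> R) :=
  forall x u (t : R), K x -> K u -> 0 <= t <= 1 ->
    f (t *: x + (1 - t) *: u) <= t * f x + (1 - t) * f u.

(* the values whose infimum is the interior strong convexity constant
   mu_f^{xc}; s is the point (other than the origin x of the ray) where
   the ray {x + t (xc - x) | t >= 0} meets the relative boundary of K;
   <u - x, grad f(x)> is the differential 'd f x applied to u - x. *)
Definition int_sc_values (K : set V) (xc : V) (f : V -> R) : set (\bar R) :=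
  [set z | exists x (g : R) s,
     [/\ K x, x <> xc, 0 < g <= 1,
         relbd K s /\ (exists t : R, 0 < t /\ s = x + t *: (xc - x)) &
         z = ((2 / g ^+ 2) *
                (f (x + g *: (s - x)) - f x - 'd f x (x + g *: (s - x) - x)))%:E]].

Definition int_sc (K : set V) (xc : V) (f : V -> R) : \bar R :=
  ereal_inf (int_sc_values K xc f).

End Defs.

Definition int_sc_L {R : realType} {V W : normedModType R}
  (X : set V) (Y : set W) (L : V -> W -> R) (xc : V) : \bar R :=
  ereal_inf [set int_sc X xc (fun x => L x y) | y in Y].

Definition int_sc_Lc {R : realType} {V W : normedModType R}
  (X : set V) (Y : set W) (L : V -> W -> R) (yc : W) : \bar R :=
  ereal_inf [set int_sc Y yc (fun y => - L x y) | x in X].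

(* Main.v *)
Require Import Defs.
From HB Require Import structures.
From mathcomp Require Import all_boot all_order all_algebra.
From mathcomp Require Import all_classical all_reals all_analysis.
From mathcomp Require Import ring lra.
Import Order.TTheory GRing.Theory Num.Theory.
Import numFieldNormedType.Exports.
Local Open Scope classical_set_scope.
Local Open Scope ring_scope.



Section S.
Context {R : realType} {V : normedModType R}.

Lemma cvx_of (K : set V) : convex_set (K : set (convex_lmodType V)) ->
  forall a b (t : R), K a -> K b -> 0 <= t <= 1 -> K (t *: a + (1 - t) *: b).
Proof.
move=> cK a b t Ka Kb /andP[t0 t1].
have := cK a b (Itv01 t0 t1); rewrite !inE => /(_ Ka Kb).
by [].
Qed.

Lemma aff_comb (K : set V) z x (a b : R) : aff_hull K z -> K x -> a + b = 1 ->
  aff_hull K (a *: z + b *: x).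
Proof.
move=> [s [sK [s1 ->]]] Kx ab.
exists (map (fun p => (a * p.1, p.2)) s ++ [:: (b, x)]); split.
  move=> p; rewrite mem_cat => /orP[/mapP[q qs ->]|]; first exact: (sK q qs).
  by rewrite inE => /eqP ->.
rewrite !big_cat !big_map !big_seq1 /= -mulr_sumr s1 mulr1; split => //.
by rewrite scaler_sumr; congr (_ + _); apply: eq_bigr => p _; rewrite scalerA.
Qed.

Definition cvx (K : set V) := forall a b (t : R), K a -> K b -> 0 <= t <= 1 -> K (t *: a + (1 - t) *: b).

Lemma relint_seg (K : set V) x xc t : cvx K -> K x -> relint K xc -> 0 < t <= 1 ->
  relint K (x + t *: (xc - x)).
Proof.
move=> cK Kx [Kxc [e [e0 He]]] /andP[t0 t1].
have sE : x + t *: (xc - x) = t *: xc + (1 - t) *: x.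
  by rewrite scalerBr scalerBl scale1r addrCA.
rewrite sE; split; first by apply: cK => //; rewrite (ltW t0) t1.
exists (t * e); split; first by rewrite mulr_gt0.
move=> z Az zs.
set w := t^-1 *: z + (1 - t^-1) *: x.
have Aw : aff_hull K w by apply: aff_comb => //; rewrite addrC subrK.
have tn0 : t != 0 by rewrite gt_eqF.
have zE : z = t *: w + (1 - t) *: x.
  rewrite /w scalerDr !scalerA mulrBr mulr1 mulfV // scale1r -addrA -scalerDl.
  by rewrite addrA subrK subrr scale0r addr0.
have zsE : z - (t *: xc + (1 - t) *: x) = t *: (w - xc).
  by rewrite {1}zE opprD addrACA subrr addr0 scalerBr.
have wxc : `|w - xc| < e.
  move: zs; rewrite zsE normrZ gtr0_norm //.
  by rewrite ltr_pM2l.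
rewrite zE; apply: cK => //; first exact: He.
by rewrite (ltW t0) t1.
Qed.
End S.

Section P.
Context {R : realType} {V W : normedModType R}.

Lemma sum_pair_r (s : seq (R * V)) (c : W) :
  \sum_(p <- s) p.1 *: ((p.2, c) : V * W) = (\sum_(p <- s) p.1 *: p.2, (\sum_(p <- s) p.1) *: c).
Proof.
elim: s => [|p s IH]; first by rewrite !big_nil scale0r.
by rewrite !big_cons IH scalerDl.
Qed.

Lemma sum_pair_l (s : seq (R * W)) (c : V) :
  \sum_(p <- s) p.1 *: ((c, p.2) : V * W) = ((\sum_(p <- s) p.1) *: c, \sum_(p <- s) p.1 *: p.2).
Proof.
elim: s => [|p s IH]; first by rewrite !big_nil scale0r.
by rewrite !big_cons IH scalerDl.
Qed.

Lemma relint_fst (X : set V) (Y : set W) xc yc :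
  relint (X `*` Y) (xc, yc) -> relint X xc.
Proof.
move=> [[Xxc Yyc] [e [e0 H]]]; split => //; exists e; split => // z Az zx.
suff : (X `*` Y) (z, yc) by case.
apply: H.
  case: Az => s [sK [s1 ->]].
  exists (map (fun p => (p.1, (p.2, yc))) s); split.
    by move=> p /mapP[q qs ->]; split; [exact: (sK q qs)|].
  by rewrite !big_map /= s1 sum_pair_r s1 scale1r.
by rewrite prod_normE gt_max /= subrr normr0 e0 andbT.
Qed.

Lemma relint_snd (X : set V) (Y : set W) xc yc :
  relint (X `*` Y) (xc, yc) -> relint Y yc.
Proof.
move=> [[Xxc Yyc] [e [e0 H]]]; split => //; exists e; split => // z Az zx.
suff : (X `*` Y) (xc, z) by case.
apply: H.
  case: Az => s [sK [s1 ->]].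
  exists (map (fun p => (p.1, (xc, p.2))) s); split.
    by move=> p /mapP[q qs ->]; split; [|exact: (sK q qs)].
  by rewrite !big_map /= s1 sum_pair_l s1 scale1r.
by rewrite prod_normE gt_max /= subrr normr0 e0.
Qed.
End P.
Section F.
Context {R : realType} {V : normedModType R}.

Lemma first_order (K : set V) (f : V -> R) mu x u : differentiable f x -> K x -> K u ->
  strongly_convex_on mu K f ->
  f x + 'd f x (u - x) + mu / 2 * `|u - x| ^+ 2 <= f u.
Proof.
move=> df Kx Ku sc.
set v := u - x.
rewrite -deriveE //.
have dv := @diff_derivable _ _ _ f x v df.
set g := fun h : R => h^-1 *: ((f \o shift x) (h *: v) - f x).
have gD : g @ 0^' --> 'D_v f x by exact: dv.
have gR : g @ 0^'+ --> 'D_v f x.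
  move=> A /gD /nbhs_ballP [_ /posnumP[e] xe_A].
  by exists e%:num => //= y xe_y; rewrite lt_def => /andP [xney _]; apply: xe_A.
set c := mu / 2 * `|v| ^+ 2.
have kR : (fun h => g h - h * c) @ 0^'+ --> 'D_v f x - 0 * c.
  apply: cvgB => //; apply: cvgMr_tmp; apply: cvg_at_right_filter; exact: cvg_id.
rewrite mul0r subr0 in kR.
suff : 'D_v f x <= f u - f x - c by lra.
apply: (cvgr_to_le kR).
near=> h.
have h0 : 0 < h by near: h; exact: nbhs_right_gt.
have h1 : h < 1 by near: h; exact: nbhs_right_lt ltr01.
have hn0 : h != 0 by rewrite gt_eqF.
have key : h * g h = f (h *: u + (1 - h) *: x) - f x.
  rewrite /g /= [X in h * X]/(h^-1 * _) mulrA mulfV // mul1r.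
  congr (f _ - _).
  by rewrite /v scalerBr scalerBl scale1r -addrA [- _ + x]addrC.
have := sc u x h Ku Kx; rewrite (ltW h0) (ltW h1) => /(_ isT) scI.
rewrite -(ler_pM2l h0) mulrBr key.
rewrite -/v /c.
nra.
Unshelve. all: by end_near.
Qed.
End F.
Section M.
Context {R : realType} {V : normedModType R}.

Lemma side (X : set V) (f : V -> R) mu xc delta : closed X -> cvx X ->
  (forall x, X x -> differentiable f x) -> strongly_convex_on mu X f -> 0 <= mu ->
  relint X xc -> (forall s, relbd X s -> delta <= `|s - xc|) -> 0 <= delta ->
  ((mu * delta ^+ 2)%:E <= int_sc X xc f)%E.
Proof.
move=> cX cvX df sc mu0 rxc hd d0.
apply: le_ereal_inf_tmp => _ [x [g [s [Xx xnxc /andP[g0 g1] [bs [t [t0 sE]]] ->]]]].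
rewrite lee_fin.
have Xs : X s by case: bs; rewrite -(closure_id X).1.
have t1 : 1 < t.
  rewrite ltNge; apply/negP => t1.
  case: bs => _; apply; rewrite sE; apply: relint_seg => //.
  by rewrite t0 t1.
have dsx : delta <= `|s - x|.
  apply: (le_trans (hd s bs)).
  have -> : s - xc = (t - 1) *: (xc - x).
    by rewrite sE scalerBl scale1r opprB addrAC addrC.
  have -> : s - x = t *: (xc - x) by rewrite sE addrAC subrr add0r.
  rewrite !normrZ ler_wpM2r // !gtr0_norm ?subr_gt0 //.
  lra.
set u := x + g *: (s - x).
have Xu : X u.
  have -> : u = g *: s + (1 - g) *: x.
    by rewrite /u scalerBr scalerBl scale1r addrCA.
  by apply: cvX => //; rewrite (ltW g0) g1.
have fo := @first_order _ _ X f mu x u (df x Xx) Xx Xu sc.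
have -> : u - x = g *: (s - x) by rewrite /u addrAC subrr add0r.
rewrite -/u in fo *.
move: fo.
have -> : u - x = g *: (s - x) by rewrite /u addrAC subrr add0r.
rewrite normrZ gtr0_norm // => fo.
set D := 'd f x (g *: (s - x)).
set n := `|s - x|.
have gn0 : g != 0 by rewrite gt_eqF.
have E : mu * n ^+ 2 = 2 / g ^+ 2 * (mu / 2 * (g * n) ^+ 2).
  by field; rewrite gn0.
apply: (le_trans (y := mu * n ^+ 2)).
  by rewrite ler_wpM2l // lerXn2r // nnegrE ?normr_ge0.
rewrite E; apply: ler_wpM2l; first by rewrite mulr_ge0 // invr_ge0 exprn_ge0 // ltW.
move: fo; rewrite -/D -/n; lra.
Qed.
End M.
Lemma diff_partial1 {R : realType} {V W : normedModType R} (L : V -> W -> R) x y :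
  differentiable (fun p : V * W => L p.1 p.2) (x, y) -> differentiable (fun x => L x y) x.
Proof.
move=> d.
have dp : differentiable (fun z : V => (z, y)) x.
  apply: differentiable_pair; first exact: ex_diff.
  exact: differentiable_cst.
exact: (differentiable_comp dp d).
Qed.

Lemma diff_partial2 {R : realType} {V W : normedModType R} (L : V -> W -> R) x y :
  differentiable (fun p : V * W => L p.1 p.2) (x, y) -> differentiable (fun y => - L x y) y.
Proof.
move=> d.
have dp : differentiable (fun z : W => (x, z)) y.
  apply: differentiable_pair; last exact: ex_diff.
  exact: differentiable_cst.
apply: differentiableN.
exact: (differentiable_comp dp d).
Qed.

Theorem proposition12 (R : realType) (V W : normedModType R)
  (X : set V) (Y : set W) (L : V -> W -> R) (muX muY : R)
  (xc : V) (yc : W) (deltax deltay : R) :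
  compact X -> compact Y ->
  convex_set (X : set (convex_lmodType V)) ->
  convex_set (Y : set (convex_lmodType W)) ->
  (forall x y, X x -> Y y -> differentiable (fun p : V * W => L p.1 p.2) (x, y)) ->
  (forall y, Y y -> convex_on X (fun x => L x y)) ->
  (forall x, X x -> convex_on Y (fun y => - L x y)) ->
  0 < muX -> 0 < muY ->
  (forall y, Y y -> strongly_convex_on muX X (fun x => L x y)) ->
  (forall x, X x -> strongly_convex_on muY Y (fun y => - L x y)) ->
  relint (X `*` Y) (xc, yc) ->
  (exists2 s, relbd X s & `|s - xc| = deltax) ->
  (forall s, relbd X s -> deltax <= `|s - xc|) ->
  0 < deltax ->
  (exists2 s, relbd Y s & `|s - yc| = deltay) ->
  (forall s, relbd Y s -> deltay <= `|s - yc|) ->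
  ((muX * deltax ^+ 2)%:E <= int_sc_L X Y L xc)%E /\
  ((muY * deltay ^+ 2)%:E <= int_sc_Lc X Y L yc)%E.
Proof.
move=> cX cY cvxX cvxY dL _ _ muX0 muY0 scX scY rint _ hdx dx0 [sy _ dyE] hdy.
have hV := @norm_hausdorff R V; have hW := @norm_hausdorff R W.
split.
- apply: le_ereal_inf_tmp => _ [y Yy <-].
  apply: (@side _ _ X _ muX xc deltax (compact_closed hV cX) (@cvx_of _ _ X cvxX) _ (scX y Yy) (ltW muX0)
           (@relint_fst _ _ _ X Y xc yc rint) hdx (ltW dx0)).
  by move=> x Xx; apply: diff_partial1; apply: dL.
- apply: le_ereal_inf_tmp => _ [x Xx <-].
  apply: (@side _ _ Y _ muY yc deltay (compact_closed hW cY) (@cvx_of _ _ Y cvxY) _ (scY x Xx) (ltW muY0)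
           (@relint_snd _ _ _ X Y xc yc rint) hdy).
  + by move=> y Yy; apply: diff_partial2; apply: dL.
  + by rewrite -dyE normr_ge0.
Qed.
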